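(* For all processes $s,t$ of a PTS over $A_\tau$, $s$ and $t$ are weak probabilistic trace equivalent if and only if $\mathcal{L}^{\mathrm{w}}(s)\equiv^\dagger\mathcal{L}^{\mathrm{w}}(t)$, i.e. every formula in $\mathcal{L}^{\mathrm{w}}(s)$ is $\equiv^\dagger$-related to some formula in $\mathcal{L}^{\mathrm{w}}(t)$ and vice versa.
   Context: PTS $(\mathcal{S},A_\tau,\to)$ with $A_\tau=A\cup\{\tau\}$, $\tau$ the silent action, finitely supported distributions; processes image-finite and finite. Computations $c=s_0\xrightarrow{a_1}\cdots\xrightarrow{a_n}s_n$ via transitions $s_{i-1}\xrightarrow{a_i}\pi_i$, $s_i\in\mathrm{supp}(\pi_i)$; $\Pr(c)=\prod\pi_i(s_i)$ (empty: 1); $|c|=n$; $\mathrm{tr}(c)=a_1\cdots a_n$; maximal = not a proper prefix of another computation from the same process; $\mathcal{C}_{\max}(z)$; $\Pr$ of a set is the sum. A resolution of $s$ is a PTS $\mathcal{Z}=(Z,A_\tau,\to_{\mathcal{Z}})$ with $\mathrm{corr}\colon Z\to\mathcal{S}$ and initial state $z_s$, $\mathrm{corr}(z_s)=s$, such that $z_s$ is in no target support, every other state is in the support of a target of a transition from a different state, every $z\xrightarrow{a}_{\mathcal{Z}}\pi$ is matched by $\mathrm{corr}(z)\xrightarrow{a}\pi'$ with $\pi(z')=\pi'(\mathrm{corr}(z'))$, and each state has at most one outgoing transition; $\mathrm{res}(s)$ the set of resolutions. Traces $\alpha\equiv\beta$ iff they coincide after deleting all $\tau$'s. For $\alpha\in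 A^\star$, $\mathcal{C}^{\mathrm{w}}(z,\alpha)$ is the set of computations $c$ from $z$ with $\mathrm{tr}(c)\equiv\alpha$ that are not proper prefixes of another computation $c'$ from $z$ with $\mathrm{tr}(c')\equiv\alpha$. $s,t$ are weak probabilistic trace equivalent iff for every $\mathcal{Z}_s\in\mathrm{res}(s)$ there is $\mathcal{Z}_t\in\mathrm{res}(t)$ with $\Pr(\mathcal{C}^{\mathrm{w}}(z_s,\alpha))=\Pr(\mathcal{C}^{\mathrm{w}}(z_t,\alpha))$ for all $\alpha\in A^\star$, and symmetrically. Logic $\mathcal{L}^{\mathrm{w}}$: trace formulae $\Phi::=\top\mid\langle a\rangle\Phi$ with $a\in A_\tau$, $\mathrm{depth}(\top)=0$, $\mathrm{depth}(\langle a\rangle\Phi)=1+\mathrm{depth}(\Phi)$; trace distribution formulae $\bigoplus_{i\in I}r_i\Phi_i$ ($I$ finite nonempty, $\Phi_i$ pairwise distinct, $r_i\in(0,1]$, $\sum r_i=1$), viewed as distributions on trace formulae. $c\models\top$ always; $c\models\langle a\rangle\Phi$ iff $c=s\xrightarrow{a}c'$ with $c'\models\Phi$. $s\models\bigoplus_i r_i\Phi_i$ iff some $\mathcal{Z}\in\mathrm{res}(s)$ with initial state $z$ satisfies $\Pr(\{c\in\mathcal{C}_{\max}(z):c\models\Phi_i,|c|=\mathrm{depth}(\Phi_i)\})=r_i$ for all $i$. $\mathcal{L}^{\mathrm{w}}(s)$ is the set of trace distribution formulae satisfied by $s$. Every trace formula is $\Phi_\alpha$ for a unique $\alpha\in A_\tau^\star$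 ($\Phi_\varepsilon=\top$, $\Phi_{a\alpha}=\langle a\rangle\Phi_\alpha$); $\Phi_\alpha\equiv\Phi_\beta$ iff $\alpha\equiv\beta$; $\Psi_1\equiv^\dagger\Psi_2$ iff $\Psi_1,\Psi_2$ assign the same total probability to every $\equiv$-class of trace formulae. *)

(* Defs.v *)
From Stdlib Require Import Reals List.
Import ListNotations.
Open Scope R_scope.
Set Implicit Arguments.

(* A PTS over A_tau = option A  (None = tau) with state type X is given by a
   transition relation  X -> option A -> (X -> R) -> Prop  whose targets are
   finitely supported probability distributions. *)

Definition sumR (l : list R) : R := fold_right Rplus 0 l.

Definition is_dist (X : Type) (pi : X -> R) : Prop :=
  exists l : list X, NoDup l /\ (forall x, pi x <> 0 -> In x l) /\
    (forall x, 0 <= pi x) /\ sumR (map pi l) = 1.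

Definition is_pts (A X : Type) (T : X -> option A -> (X -> R) -> Prop) : Prop :=
  forall x a pi, T x a pi -> is_dist pi.

(* a step of a computation: the action, the target distribution of the
   transition used, and the state reached (in the support of the target) *)
Definition step (A X : Type) : Type := (option A * (X -> R) * X)%type.

Fixpoint is_comp (A X : Type) (T : X -> option A -> (X -> R) -> Prop)
    (x : X) (l : list (step A X)) : Prop :=
  match l with
  | [] => True
  | (a, pi, y) :: l' => T x a pi /\ 0 < pi y /\ is_comp T y l'
  end.

Definition comp_prob (A X : Type) (l : list (step A X)) : R :=
  fold_right (fun st p => let '(_, pi, y) := st in pi y * p) 1 l.

Definition comp_trace (A X : Type) (l : list (step A X)) : list (option A) :=
  map (fun st => fst (fst st)) l.

Definition proper_prefix (B : Type) (c c' : list B) : Prop :=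
  exists d, d <> [] /\ c' = c ++ d.

Definition is_max_comp (A X : Type) (T : X -> option A -> (X -> R) -> Prop)
    (x : X) (c : list (step A X)) : Prop :=
  is_comp T x c /\ ~ (exists c', is_comp T x c' /\ proper_prefix c c').

Definition set_prob (A X : Type) (P : list (step A X) -> Prop) (r : R) : Prop :=
  exists L : list (list (step A X)),
    NoDup L /\ (forall c, P c <-> In c L) /\ sumR (map (@comp_prob A X) L) = r.

Inductive reach (A S : Type) (T : S -> option A -> (S -> R) -> Prop) (s : S) : S -> Prop :=
| reach_refl : reach T s s
| reach_step : forall x a pi y, reach T s x -> T x a pi -> 0 < pi y -> reach T s y.

Definition succ (A S : Type) (T : S -> option A -> (S -> R) -> Prop) (y x : S) : Prop :=
  exists a pi, T x a pi /\ 0 < pi y.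

Definition image_finite (A S : Type) (T : S -> option A -> (S -> R) -> Prop) (s : S) : Prop :=
  forall x, reach T s x -> exists L : list (option A * (S -> R)),
    forall a pi, T x a pi -> In (a, pi) L.

(* finite: there is no infinite computation from s *)
Definition finite_proc (A S : Type) (T : S -> option A -> (S -> R) -> Prop) (s : S) : Prop :=
  Acc (succ T) s.

Definition is_resolution (A S : Type) (T : S -> option A -> (S -> R) -> Prop) (s : S)
    (Z : Type) (TZ : Z -> option A -> (Z -> R) -> Prop) (corr : Z -> S) (z0 : Z) : Prop :=
  is_pts TZ /\
  corr z0 = s /\
  (forall z a pi, TZ z a pi -> ~ (0 < pi z0)) /\
  (forall z, z <> z0 -> exists z' a pi, z' <> z /\ TZ z' a pi /\ 0 < pi z) /\
  (forall z a pi, TZ z a pi ->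
     exists pi', T (corr z) a pi' /\ forall z', pi z' = pi' (corr z')) /\
  (forall z a1 pi1 a2 pi2, TZ z a1 pi1 -> TZ z a2 pi2 -> a1 = a2 /\ pi1 = pi2).

Fixpoint vis (A : Type) (l : list (option A)) : list A :=
  match l with
  | [] => []
  | None :: l' => vis l'
  | Some a :: l' => a :: vis l'
  end.

Definition Cw (A Z : Type) (TZ : Z -> option A -> (Z -> R) -> Prop) (z : Z)
    (alpha : list A) (c : list (step A Z)) : Prop :=
  is_comp TZ z c /\ vis (comp_trace c) = alpha /\
  ~ (exists c', is_comp TZ z c' /\ vis (comp_trace c') = alpha /\ proper_prefix c c').

Definition wpte_half (A S : Type) (T : S -> option A -> (S -> R) -> Prop) (s t : S) : Prop :=
  forall (Z1 : Type) (T1 : Z1 -> option A -> (Z1 -> R) -> Prop) (corr1 : Z1 -> S) (z1 : Z1),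
    is_resolution T s T1 corr1 z1 ->
    exists (Z2 : Type) (T2 : Z2 -> option A -> (Z2 -> R) -> Prop) (corr2 : Z2 -> S) (z2 : Z2),
      is_resolution T t T2 corr2 z2 /\
      forall alpha : list A, exists r : R,
        set_prob (Cw T1 z1 alpha) r /\ set_prob (Cw T2 z2 alpha) r.

Definition weak_prob_trace_equiv (A S : Type) (T : S -> option A -> (S -> R) -> Prop) (s t : S) : Prop :=
  wpte_half T s t /\ wpte_half T t s.

Inductive tform (A : Type) : Type :=
| TTop : tform A
| TDia : option A -> tform A -> tform A.
Arguments TTop {A}.

Fixpoint depth (A : Type) (f : tform A) : nat :=
  match f with TTop => 0%nat | TDia _ f' => S (depth f') end.

Fixpoint csat (A X : Type) (c : list (step A X)) (f : tform A) : Prop :=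
  match f with
  | TTop => True
  | TDia a f' => match c with
                 | [] => False
                 | (a', _, _) :: c' => a' = a /\ csat c' f'
                 end
  end.

(* trace distribution formula  (+)_{i in I} r_i Phi_i  as a list of pairs *)
Definition tdform (A : Type) : Type := list (tform A * R).

Definition is_tdform (A : Type) (psi : tdform A) : Prop :=
  psi <> [] /\ NoDup (map fst psi) /\
  (forall f r, In (f, r) psi -> 0 < r <= 1) /\ sumR (map snd psi) = 1.

Definition tdsat (A S : Type) (T : S -> option A -> (S -> R) -> Prop) (s : S)
    (psi : tdform A) : Prop :=
  exists (Z : Type) (TZ : Z -> option A -> (Z -> R) -> Prop) (corr : Z -> S) (z : Z),
    is_resolution T s TZ corr z /\
    forall f r, In (f, r) psi ->
      set_prob (fun c => is_max_comp TZ z c /\ csat c f /\ length c = depth f) r.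

Fixpoint ftrace (A : Type) (f : tform A) : list (option A) :=
  match f with TTop => [] | TDia a f' => a :: ftrace f' end.

Definition tform_equiv (A : Type) (f g : tform A) : Prop :=
  vis (ftrace f) = vis (ftrace g).

Inductive class_mass (A : Type) : tform A -> tdform A -> R -> Prop :=
| cm_nil : forall f, class_mass f [] 0
| cm_in : forall f g r psi m, tform_equiv g f -> class_mass f psi m ->
            class_mass f ((g, r) :: psi) (r + m)
| cm_out : forall f g r psi m, ~ tform_equiv g f -> class_mass f psi m ->
            class_mass f ((g, r) :: psi) m.

Definition tdf_equiv (A : Type) (psi1 psi2 : tdform A) : Prop :=
  forall f m, class_mass f psi1 m <-> class_mass f psi2 m.

Definition Lw_half (A S : Type) (T : S -> option A -> (S -> R) -> Prop) (s t : S) : Prop :=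
  forall psi, is_tdform psi -> tdsat T s psi ->
    exists psi', is_tdform psi' /\ tdsat T t psi' /\ tdf_equiv psi psi'.

Definition Lw_equiv (A S : Type) (T : S -> option A -> (S -> R) -> Prop) (s t : S) : Prop :=
  Lw_half T s t /\ Lw_half T t s.

(* Main.v *)
Require Import Defs.
From Stdlib Require Import Reals List Lra Lia Classical ClassicalEpsilon Permutation.
Import ListNotations.
Open Scope R_scope.
Set Implicit Arguments.

Notation emi := excluded_middle_informative.

Definition sumP {X : Type} (L : list X) (p : X -> R) (Q : X -> Prop) : R :=
  sumR (map (fun x => if emi (Q x) then p x else 0) L).

Lemma sumR_app l1 l2 : sumR (l1 ++ l2) = sumR l1 + sumR l2.
Proof. induction l1; simpl; [lra| rewrite IHl1; lra]. Qed.

Lemma sumR_map_ext {X} (L : list X) f g :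
  (forall x, In x L -> f x = g x) -> sumR (map f L) = sumR (map g L).
Proof. induction L; simpl; intros H; auto. rewrite H, IHL; auto. Qed.

Lemma sumR_scal {X} (L : list X) k f : sumR (map (fun x => k * f x) L) = k * sumR (map f L).
Proof. induction L; simpl; [ring| rewrite IHL; ring]. Qed.

Lemma sumR_perm l1 l2 : Permutation l1 l2 -> sumR l1 = sumR l2.
Proof. induction 1; simpl; lra. Qed.

Lemma sumR_nonneg {X} (L : list X) f : (forall x, In x L -> 0 <= f x) -> 0 <= sumR (map f L).
Proof. induction L; simpl; intros H; [lra|]. pose proof (H a (or_introl eq_refl)).
  assert (0 <= sumR (map f L)) by (apply IHL; auto). lra. Qed.

Lemma sumP_ext {X} (L : list X) p Q1 Q2 :
  (forall x, In x L -> (Q1 x <-> Q2 x)) -> sumP L p Q1 = sumP L p Q2.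
Proof. intros H; unfold sumP; apply sumR_map_ext; intros x Hx.
  destruct (emi (Q1 x)), (emi (Q2 x)); firstorder. Qed.

Lemma sumP_false {X} (L : list X) p Q : (forall x, In x L -> ~ Q x) -> sumP L p Q = 0.
Proof. unfold sumP; induction L; simpl; intros H; auto.
  destruct (emi (Q a)); [exfalso; eapply H; eauto|]. rewrite IHL; auto; lra. Qed.

Lemma sumP_true {X} (L : list X) p Q : (forall x, In x L -> Q x) -> sumP L p Q = sumR (map p L).
Proof. unfold sumP; induction L; simpl; intros H; auto.
  destruct (emi (Q a)); [|exfalso; eapply n; eauto]. rewrite IHL; auto. Qed.

Lemma sumP_or {X} (L : list X) p Q1 Q2 :
  (forall x, In x L -> ~ (Q1 x /\ Q2 x)) ->
  sumP L p (fun x => Q1 x \/ Q2 x) = sumP L p Q1 + sumP L p Q2.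
Proof. unfold sumP; induction L; simpl; intros H; [lra|].
  rewrite IHL by auto.
  destruct (emi (Q1 a \/ Q2 a)), (emi (Q1 a)), (emi (Q2 a)); try lra; firstorder. Qed.

Lemma sumP_nonneg {X} (L : list X) p Q : (forall x, In x L -> 0 <= p x) -> 0 <= sumP L p Q.
Proof. intros H; apply sumR_nonneg; intros x Hx; destruct (emi (Q x)); auto; lra. Qed.

Lemma sumP_le {X} (L : list X) p Q : (forall x, In x L -> 0 <= p x) -> sumP L p Q <= sumR (map p L).
Proof. unfold sumP; induction L; simpl; intros H; [lra|].
  assert (sumR (map (fun x => if emi (Q x) then p x else 0) L) <= sumR (map p L)) by auto.
  pose proof (H a (or_introl eq_refl)). destruct (emi (Q a)); lra. Qed.

Lemma sumP_all {X} (L : list X) p Q : (forall x, In x L -> 0 < p x) ->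
  sumP L p Q = sumR (map p L) -> forall x, In x L -> Q x.
Proof. unfold sumP; induction L; simpl; intros H E x Hx; [destruct Hx|].
  assert (sumR (map (fun x => if emi (Q x) then p x else 0) L) <= sumR (map p L))
    by (apply sumP_le; intros; apply Rlt_le; auto).
  pose proof (H a (or_introl eq_refl)).
  destruct (emi (Q a)).
  - destruct Hx; [subst; auto|]. apply IHL; auto. lra.
  - lra. Qed.

Lemma sumP_family {X Y} (G : list Y) (L : list X) p (E : Y -> X -> Prop) :
  NoDup G -> (forall g1 g2 x, In g1 G -> In g2 G -> E g1 x -> E g2 x -> g1 = g2) ->
  sumR (map (fun g => sumP L p (E g)) G) = sumP L p (fun x => exists g, In g G /\ E g x).
Proof.
  induction G as [|g G IH]; intros Hnd Hd; simpl.
  - symmetry; apply sumP_false. intros x _ [g [[] _]].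
  - inversion Hnd; subst. rewrite IH; auto.
    2:{ intros; eapply Hd; eauto; right; auto. }
    rewrite <- sumP_or.
    + apply sumP_ext; intros x _; split.
      * intros [K|[g' [K1 K2]]]; eauto.
      * intros [g' [[<-|K1] K2]]; eauto.
    + intros x _ [K1 [g' [K2 K3]]].
      assert (g = g') by (eapply Hd; eauto; [left|right]; auto). subst; auto.
Qed.

Definition filterP {X} (Q : X -> Prop) (L : list X) :=
  filter (fun x => if emi (Q x) then true else false) L.

Lemma In_filterP {X} (Q : X -> Prop) L x : In x (filterP Q L) <-> In x L /\ Q x.
Proof. unfold filterP; rewrite filter_In. destruct (emi (Q x)); intuition congruence. Qed.

Lemma sum_filterP {X} (Q : X -> Prop) L p : sumR (map p (filterP Q L)) = sumP L p Q.
Proof. unfold filterP, sumP; induction L; simpl; auto.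
  destruct (emi (Q a)); simpl; rewrite IHL; lra. Qed.

Definition dedup {X} (l : list X) : list X :=
  fold_right (fun x acc => if emi (In x acc) then acc else x :: acc) [] l.

Lemma dedup_spec {X} (l : list X) : NoDup (dedup l) /\ forall x, In x (dedup l) <-> In x l.
Proof. induction l as [|a l [N H]]; simpl.
  - split; [constructor| tauto].
  - destruct (emi (In a (dedup l))).
    + split; auto. intros x; rewrite H; split; auto. intros [<-|]; auto. apply H; auto.
    + split; [constructor; auto|]. intros x; simpl; rewrite H; tauto.
Qed.

Lemma set_prob_unique {A X} (P : list (step A X) -> Prop) r1 r2 :
  set_prob P r1 -> set_prob P r2 -> r1 = r2.
Proof.
  intros [L1 [N1 [H1 S1]]] [L2 [N2 [H2 S2]]]. subst.
  apply sumR_perm, Permutation_map, NoDup_Permutation; auto.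
  intro x; rewrite <- H1, <- H2; tauto.
Qed.

Lemma set_prob_ext {A X} (P Q : list (step A X) -> Prop) r :
  (forall c, P c <-> Q c) -> set_prob P r -> set_prob Q r.
Proof. intros H [L [N [H1 S1]]]. exists L; repeat split; auto; intros.
  - apply H1, H; auto.
  - apply H, H1; auto. Qed.

Lemma set_prob_filter {A X} (P Q : list (step A X) -> Prop) L :
  NoDup L -> (forall c, P c <-> In c L) ->
  set_prob (fun c => P c /\ Q c) (sumP L (@comp_prob A X) Q).
Proof. intros N H. exists (filterP Q L). split; [|split].
  - apply NoDup_filter; auto.
  - intros c; rewrite In_filterP, <- H; tauto.
  - apply sum_filterP.
Qed.

Lemma set_prob_single {A X} (P : list (step A X) -> Prop) :
  (forall c, P c <-> c = []) -> set_prob P 1.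
Proof. intros H; exists [[]]; split; [|split].
  - constructor; [intros []|constructor].
  - intros c; rewrite H; simpl; intuition.
  - simpl; lra.
Qed.

Lemma set_prob_empty {A X} (P : list (step A X) -> Prop) :
  (forall c, ~ P c) -> set_prob P 0.
Proof. intros H; exists []; split; [|split].
  - constructor.
  - intros c; simpl; specialize (H c); tauto.
  - reflexivity.
Qed.

Lemma set_prob_split {A Z} (a : option A) (pi : Z -> R) (ys : list Z)
  (Q : Z -> list (step A Z) -> Prop) (f : Z -> R) :
  NoDup ys -> (forall y, In y ys -> set_prob (Q y) (f y)) ->
  set_prob (fun c => exists y c', In y ys /\ c = (a, pi, y) :: c' /\ Q y c')
    (sumR (map (fun y => pi y * f y) ys)).
Proof.
  induction ys as [|y ys IH]; intros Hnd HQ.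
  - apply set_prob_empty. intros c [y [c' [[] _]]].
  - inversion Hnd as [|y0 ys0 Hny Hnd2]; subst.
    destruct (HQ y (or_introl eq_refl)) as [L1 [N1 [H1 S1]]].
    destruct IH as [L2 [N2 [H2 S2]]]; auto. { intros; apply HQ; right; auto. }
    exists (map (cons (a,pi,y)) L1 ++ L2). split; [|split; [split|]].
    + apply NoDup_app.
      * apply FinFun.Injective_map_NoDup; auto. intros u v E; injection E; auto.
      * auto.
      * intros c Hc Hc2. apply in_map_iff in Hc. destruct Hc as [c1 [<- _]].
        apply H2 in Hc2. destruct Hc2 as [y' [c' [Hy' [E _]]]]. injection E; intros; subst; auto.
    + intros [y' [c' [[<-|Hy'] [-> Hq]]]]; apply in_or_app.
      * left; apply in_map; apply H1; auto.
      * right; apply H2; eauto 6.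
    + intros Hc; apply in_app_or in Hc; destruct Hc as [Hc|Hc].
      * apply in_map_iff in Hc; destruct Hc as [c1 [<- Hc1]]. exists y, c1; repeat split; auto.
        left; auto. apply H1; auto.
      * apply H2 in Hc. destruct Hc as [y' [c' [Hy' [E Hq]]]]. exists y', c'; repeat split; auto. right; auto.
    + rewrite map_app, sumR_app, map_map.
      assert (E : map (fun x => comp_prob ((a,pi,y)::x)) L1 = map (fun x => pi y * comp_prob x) L1) by reflexivity.
      rewrite E, sumR_scal, S1. change (sumR (map (fun y0 => pi y0 * f y0) (y :: ys))) with (pi y * f y + sumR (map (fun y0 => pi y0 * f y0) ys)). rewrite <- S2. reflexivity.
Qed.

Definition prefix {B} (u v : list B) := exists d, v = u ++ d.

Definition detZ {A Z} (TZ : Z -> option A -> (Z -> R) -> Prop) :=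
  forall z a1 pi1 a2 pi2, TZ z a1 pi1 -> TZ z a2 pi2 -> a1 = a2 /\ pi1 = pi2.

Definition gmax {A Z} (TZ : Z -> option A -> (Z -> R) -> Prop) (z : Z)
  (V : list (step A Z) -> Prop) (c : list (step A Z)) : Prop :=
  is_comp TZ z c /\ V c /\ ~ (exists c', is_comp TZ z c' /\ V c' /\ proper_prefix c c').

Lemma max_gmax {A Z} TZ (z:Z) c : @is_max_comp A Z TZ z c <-> gmax TZ z (fun _ => True) c.
Proof. unfold is_max_comp, gmax. split.
  - intros [H1 H2]; repeat split; auto; intros [c' [H3 [_ H4]]]; apply H2; eauto.
  - intros [H1 [_ H2]]; split; auto; intros [c' [H3 H4]]; apply H2; eauto. Qed.

Lemma Cw_gmax {A Z} TZ (z:Z) alpha c :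
  @Cw A Z TZ z alpha c <-> gmax TZ z (fun c => vis (comp_trace c) = alpha) c.
Proof. reflexivity. Qed.

Lemma gmax_ext {A Z} TZ (z:Z) (V1 V2 : list (step A Z) -> Prop) c :
  (forall d, V1 d <-> V2 d) -> (gmax TZ z V1 c <-> gmax TZ z V2 c).
Proof. intros H; unfold gmax. split; intros [H1 [H2 H3]]; (split; [auto|split; [apply H; auto|]]);
  intros [c' [H4 [H5 H6]]]; apply H3; exists c'; repeat split; auto; apply H; auto. Qed.

Lemma gmax_cons {A Z} TZ (z:Z) (V : list (step A Z) -> Prop) a pi y c' : TZ z a pi ->
  (gmax TZ z V ((a,pi,y)::c') <-> 0 < pi y /\ gmax TZ y (fun d => V ((a,pi,y)::d)) c').
Proof.
  intros Ht; unfold gmax; simpl. split.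
  - intros [[_ [Hp Hc]] [HV Hn]]. split; auto. split; auto. split; auto.
    intros [c'' [H1 [H2 [d [Hd E]]]]]. apply Hn. exists ((a,pi,y)::c''). split; [simpl; auto|]. split; auto.
    exists d; split; auto. subst; reflexivity.
  - intros [Hp [Hc [HV Hn]]]. split; [auto|]. split; auto.
    intros [c2 [H1 [H2 [d [Hd E]]]]]. subst c2. simpl in H1. destruct H1 as [_ [_ H1]].
    apply Hn. exists (c' ++ d). split; auto. split; auto. exists d; auto.
Qed.

Lemma comp_head {A Z} (TZ : Z -> option A -> (Z -> R) -> Prop) z a pi a' pi' y c' :
  detZ TZ -> TZ z a pi -> is_comp TZ z ((a',pi',y)::c') -> a' = a /\ pi' = pi.
Proof. intros Hd Ht [H _]. apply (Hd _ _ _ _ _ H Ht). Qed.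

Lemma gmax_dec {A Z} TZ (z:Z) (V : list (step A Z) -> Prop) a pi c : detZ TZ -> TZ z a pi ->
  (gmax TZ z V c <-> (c = [] /\ gmax TZ z V []) \/
     exists y c', c = (a,pi,y)::c' /\ 0 < pi y /\ gmax TZ y (fun d => V ((a,pi,y)::d)) c').
Proof.
  intros Hd Ht. destruct c as [|[[a' pi'] y] c'].
  - split; [tauto|]. intros [[_ H]|[y [c' [E _]]]]; [auto|discriminate].
  - split.
    + intros Hg. assert (a' = a /\ pi' = pi) as [-> ->] by (eapply comp_head; eauto; apply Hg).
      right. exists y, c'. split; auto. apply (proj1 (gmax_cons TZ z V a pi y c' Ht)); auto.
    + intros [[E _]|[y2 [c2 [E H]]]]; [discriminate|]. injection E; intros; subst.
      apply (proj2 (gmax_cons TZ z V a pi y2 c2 Ht)); auto.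
Qed.

Lemma gmax_notrans {A Z} TZ (z:Z) (V : list (step A Z) -> Prop) c :
  (forall a pi, ~ TZ z a pi) -> (gmax TZ z V c <-> c = [] /\ V []).
Proof. intros Hn. unfold gmax. split.
  - intros [H1 [H2 _]]. destruct c as [|[[a pi] y] c']; [auto|]. destruct H1; exfalso; eapply Hn; eauto.
  - intros [-> HV]. split; [exact I|]. split; auto. intros [c' [H1 [_ [d [Hd E]]]]].
    simpl in E; subst. destruct d as [|[[a pi] y] d]; [auto|]. destruct H1; eapply Hn; eauto.
Qed.

Lemma dist_support {Z} (pi : Z -> R) : is_dist pi ->
  exists ys, NoDup ys /\ (forall y, In y ys <-> 0 < pi y) /\ sumR (map pi ys) = 1.
Proof.
  intros [l [N [Hs [Hn S]]]]. exists (filterP (fun y => 0 < pi y) l). split; [|split].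
  - apply NoDup_filter; auto.
  - intros y; rewrite In_filterP; split; [tauto|]. intros H; split; auto. apply Hs; lra.
  - rewrite sum_filterP, <- S. unfold sumP. apply sumR_map_ext. intros y _.
    destruct (emi (0 < pi y)); auto. specialize (Hn y); lra.
Qed.

Lemma split2 {A Z} (a : option A) (pi : Z -> R) ys (P1 P2 : Z -> list (step A Z) -> Prop) :
  NoDup ys -> (forall y, In y ys -> exists r, set_prob (P1 y) r /\ set_prob (P2 y) r) ->
  exists r, set_prob (fun c => exists y c', In y ys /\ c = (a,pi,y)::c' /\ P1 y c') r /\
            set_prob (fun c => exists y c', In y ys /\ c = (a,pi,y)::c' /\ P2 y c') r.
Proof.
  intros N H.
  assert (H' : forall y, exists r, In y ys -> set_prob (P1 y) r /\ set_prob (P2 y) r).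
  { intro y; destruct (classic (In y ys)) as [Hi|Hi];
      [destruct (H y Hi) as [r Hr]; exists r; auto | exists 0; tauto]. }
  set (f := fun y => proj1_sig (constructive_indefinite_description _ (H' y))).
  exists (sumR (map (fun y => pi y * f y) ys)); split; apply set_prob_split; auto;
    intros y Hy; unfold f; destruct (constructive_indefinite_description _ (H' y)) as [r Hr];
    simpl; apply Hr; auto.
Qed.

Definition PROP {A Z} (TZ : Z -> option A -> (Z -> R) -> Prop) (z : Z) : Prop :=
  set_prob (is_max_comp TZ z) 1 /\ forall alpha, exists r, set_prob (Cw TZ z alpha) r /\
     set_prob (fun c => is_max_comp TZ z c /\ prefix alpha (vis (comp_trace c))) r.

Lemma core {A Z} (TZ : Z -> option A -> (Z -> R) -> Prop) :
  is_pts TZ -> detZ TZ -> forall z, Acc (succ TZ) z -> PROP TZ z.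
Proof.
  intros Hpts Hdet z Hacc. induction Hacc as [z _ IH].
  destruct (classic (exists a pi, TZ z a pi)) as [[a [pi Ht]] | Hno].
  2:{ assert (Hn : forall a pi, ~ TZ z a pi) by (intros a pi H; apply Hno; eauto).
      assert (Hm : forall c, is_max_comp TZ z c <-> c = []).
      { intro c; rewrite max_gmax, gmax_notrans by auto; tauto. }
      split.
      - apply set_prob_single; auto.
      - intros [|b alpha].
        + exists 1; split; apply set_prob_single; intro c.
          * rewrite Cw_gmax, gmax_notrans by auto; simpl; tauto.
          * rewrite Hm. split; [tauto|]. intros ->; split; auto. exists []; reflexivity.
        + exists 0; split; apply set_prob_empty; intro c.
          * rewrite Cw_gmax, gmax_notrans by auto; simpl; intros [_ E]; discriminate.
          * rewrite Hm. intros [-> [d E]]; discriminate. }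
  destruct (dist_support (Hpts _ _ _ Ht)) as [ys [Nys [Hys Sys]]].
  assert (IH' : forall y, In y ys -> PROP TZ y).
  { intros y Hy; apply IH; exists a, pi; split; auto; apply Hys; auto. }
  assert (Hy0 : exists y0, In y0 ys).
  { destruct ys as [|y0 ys]; [simpl in Sys; lra| exists y0; left; auto]. }
  destruct Hy0 as [y0 Hy0].
  assert (Hmax : forall c, is_max_comp TZ z c <->
            exists y c', In y ys /\ c = (a,pi,y)::c' /\ is_max_comp TZ y c').
  { intro c. rewrite max_gmax, gmax_dec by eauto. split.
    - intros [[-> Hg] | [y [c' [-> [Hp Hg]]]]].
      + exfalso. destruct Hg as [_ [_ Hn]]. apply Hn. exists [(a,pi,y0)].
        split; [simpl; repeat split; auto; apply Hys; auto|]. split; auto.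
        exists [(a,pi,y0)]; split; [discriminate|reflexivity].
      + exists y, c'; split; [apply Hys; auto|]. split; [reflexivity|]. rewrite max_gmax.
        eapply gmax_ext; [|exact Hg]. intros; tauto.
    - intros [y [c' [Hy [-> Hm]]]]. right. exists y, c'. split; [reflexivity|].
      split; [apply Hys; auto|].
      rewrite max_gmax in Hm. eapply gmax_ext; [|exact Hm]; intros; tauto. }
  assert (Hmp : forall alpha c, (is_max_comp TZ z c /\ prefix alpha (vis (comp_trace c))) <->
     exists y c', In y ys /\ c = (a,pi,y)::c' /\
        (is_max_comp TZ y c' /\ prefix alpha (vis (a :: comp_trace c')))).
  { intros alpha c. rewrite Hmax. split.
    - intros [[y [c' [Hy [-> Hm]]]] Hp]. exists y, c'; auto.
    - intros [y [c' [Hy [-> [Hm Hp]]]]]. split; [exists y, c'; auto|exact Hp]. }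
  assert (F1 : set_prob (is_max_comp TZ z) 1).
  { eapply set_prob_ext; [intro c; symmetry; apply Hmax|].
    assert (E : sumR (map (fun y => pi y * 1) ys) = 1).
    { transitivity (sumR (map pi ys)); [apply sumR_map_ext; intros; ring | exact Sys]. }
    rewrite <- E. apply set_prob_split; auto. intros; apply IH'; auto. }
  split; [exact F1|]. intro alpha.
  destruct a as [b|].
  - destruct alpha as [|b' alpha'].
    + exists 1; split.
      * apply set_prob_single. intro c. split.
        -- intros Hc. destruct c as [|[[a' pi'] y] c']; auto.
           destruct Hc as [H1 [H2 _]].
           assert (a' = Some b) as -> by (eapply comp_head; eauto).
           discriminate.
        -- intros ->. split; [exact I|]. split; [reflexivity|].
           intros [c' [H1 [H2 [d [Hd E]]]]]. simpl in E; subst.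
           destruct d as [|[[a' pi'] y] d]; [auto|].
           assert (a' = Some b) as -> by (eapply comp_head; eauto). discriminate.
      * eapply set_prob_ext; [|exact F1]. intro c; split; [|tauto].
        intros H; split; auto. exists (vis (comp_trace c)); reflexivity.
    + destruct (classic (b' = b)) as [<-|Hne].
      * destruct (split2 (Some b') pi (fun y => Cw TZ y alpha')
          (fun y c => is_max_comp TZ y c /\ prefix alpha' (vis (comp_trace c))) Nys)
          as [r [H1 H2]].
        { intros y Hy. apply (IH' y Hy). }
        exists r; split.
        -- eapply set_prob_ext; [|exact H1]. intro c. rewrite Cw_gmax, gmax_dec by eauto.
           split.
           ++ intros [y [c' [Hy [-> Hc]]]]. right. exists y, c'. split; auto.
              split; [apply Hys; auto|]. eapply gmax_ext; [|exact Hc].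
              intro d; simpl. split; [intro E; injection E; auto| intros ->; auto].
           ++ intros [[-> [_ [E _]]] | [y [c' [-> [Hp Hc]]]]]; [discriminate|].
              exists y, c'. split; [apply Hys; auto|]. split; auto.
              rewrite Cw_gmax. eapply gmax_ext; [|exact Hc].
              intro d; simpl. split; [intros ->; auto| intro E; injection E; auto].
        -- eapply set_prob_ext; [|exact H2]. intro c. rewrite Hmp. simpl.
           split; intros [y [c' [Hy [E [Hm [d Hd]]]]]]; exists y, c';
             (split; [auto|split; [auto|split; [auto|exists d]]]);
             [rewrite Hd; reflexivity| injection Hd; auto].


      * exists 0; split; apply set_prob_empty; intro c.
        -- rewrite Cw_gmax, gmax_dec by eauto.
           intros [[-> [_ [E _]]] | [y [c' [-> [Hp [_ [E _]]]]]]]; [discriminate|].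
           simpl in E. injection E; intros; auto.
        -- rewrite Hmp. intros [y [c' [_ [_ [_ [d E]]]]]]. simpl in E. injection E; intros; auto.
  - destruct (split2 None pi (fun y => Cw TZ y alpha)
          (fun y c => is_max_comp TZ y c /\ prefix alpha (vis (comp_trace c))) Nys)
          as [r [H1 H2]].
    { intros y Hy. apply (IH' y Hy). }
    exists r; split.
    + eapply set_prob_ext; [|exact H1]. intro c. rewrite Cw_gmax, gmax_dec by eauto.
      split.
      * intros [y [c' [Hy [-> Hc]]]]. right. exists y, c'. split; auto.
        split; [apply Hys; auto|]. eapply gmax_ext; [|exact Hc]. intro d; simpl; tauto.
      * intros [[-> [_ [E Hn]]] | [y [c' [-> [Hp Hc]]]]].
        -- exfalso. apply Hn. exists [(None,pi,y0)].
           split; [simpl; repeat split; auto; apply Hys; auto|]. split; [exact E|].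
           exists [(None,pi,y0)]; split; [discriminate|reflexivity].
        -- exists y, c'. split; [apply Hys; auto|]. split; auto.
           
    + eapply set_prob_ext; [|exact H2]. intro c. rewrite Hmp. simpl. tauto.
Qed.

Lemma acc_transfer {A S Z} (T : S -> option A -> (S -> R) -> Prop)
  (TZ : Z -> option A -> (Z -> R) -> Prop) (corr : Z -> S) :
  (forall z a pi, TZ z a pi -> exists pi', T (corr z) a pi' /\ forall z', pi z' = pi' (corr z')) ->
  forall x, Acc (succ T) x -> forall z, corr z = x -> Acc (succ TZ) z.
Proof. intros H x Hx. induction Hx as [x _ IH]. intros z Ez. constructor. intros y [a [pi [Ht Hp]]].
  destruct (H _ _ _ Ht) as [pi' [Ht' Hpi]]. apply (IH (corr y)); auto. exists a, pi'. subst x.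
  split; auto. rewrite <- Hpi; auto. Qed.

Lemma comp_prob_pos {A Z} TZ (z : Z) c : @is_comp A Z TZ z c -> 0 < comp_prob c.
Proof. revert z; induction c as [|[[a pi] y] c IH]; simpl; intros z H; [lra|].
  destruct H as [_ [Hp Hc]]. apply Rmult_lt_0_compat; eauto. Qed.

Lemma RES_L {A S Z} T (s:S) TZ corr (z0 : Z) : is_resolution T s TZ corr z0 -> finite_proc T s ->
  exists L, NoDup L /\ (forall c, @is_max_comp A Z TZ z0 c <-> In c L) /\
    sumR (map (@comp_prob A Z) L) = 1 /\
    (forall c, In c L -> 0 < comp_prob c) /\
    forall alpha, set_prob (Cw TZ z0 alpha)
      (sumP L (@comp_prob A Z) (fun c => prefix alpha (vis (comp_trace c)))).
Proof.
  intros [Hpts [Hc0 [_ [_ [Hcorr Hdet]]]]] Hfin.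
  assert (Hacc : Acc (succ TZ) z0) by (eapply acc_transfer; eauto).
  destruct (core Hpts Hdet Hacc) as [[L [N [HL SL]]] HW].
  exists L; split; [auto|split; [auto|split; [auto|split]]].
  - intros c Hc; apply HL in Hc; eapply comp_prob_pos; apply Hc.
  - intros alpha. destruct (HW alpha) as [r [H1 H2]].
    pose proof (set_prob_filter _ (fun c => prefix alpha (vis (comp_trace c))) N HL) as H3.
    rewrite <- (set_prob_unique H2 H3). exact H1.
Qed.

Lemma lemma_a {X1 X2 K} (L1 : list X1) (L2 : list X2) p1 p2 (k1 : X1 -> K) (k2 : X2 -> K) :
  (forall w, sumP L1 p1 (fun x => k1 x = w) = sumP L2 p2 (fun x => k2 x = w)) ->
  forall Q : K -> Prop, sumP L1 p1 (fun x => Q (k1 x)) = sumP L2 p2 (fun x => Q (k2 x)).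
Proof.
  intros H Q. destruct (dedup_spec (map k1 L1 ++ map k2 L2)) as [N HK].
  set (Ks := dedup _) in *.
  assert (E1 : sumP L1 p1 (fun x => Q (k1 x)) =
     sumR (map (fun w => sumP L1 p1 (fun x => k1 x = w /\ Q w)) Ks)).
  { rewrite sumP_family; auto. 2: { intros g1 g2 x _ _ [<- _] [<- _]; auto. }
    apply sumP_ext. intros x Hx. split.
    - intros Hq. exists (k1 x). split; auto. apply HK, in_or_app; left; apply in_map; auto.
    - intros [w [_ [-> Hq]]]; auto. }
  assert (E2 : sumP L2 p2 (fun x => Q (k2 x)) =
     sumR (map (fun w => sumP L2 p2 (fun x => k2 x = w /\ Q w)) Ks)).
  { rewrite sumP_family; auto. 2: { intros g1 g2 x _ _ [<- _] [<- _]; auto. }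
    apply sumP_ext. intros x Hx. split.
    - intros Hq. exists (k2 x). split; auto. apply HK, in_or_app; right; apply in_map; auto.
    - intros [w [_ [-> Hq]]]; auto. }
  rewrite E1, E2. apply sumR_map_ext. intros w _. destruct (classic (Q w)).
  - transitivity (sumP L1 p1 (fun x => k1 x = w)); [apply sumP_ext; intros; tauto|].
    rewrite H. apply sumP_ext; intros; tauto.
  - rewrite !sumP_false; auto; intros x _ [_ Hq]; auto.
Qed.

Lemma decomp {X A} (L : list X) p (k : X -> list A) As w :
  NoDup As -> (forall x a, In x L -> In a (k x) -> In a As) ->
  sumP L p (fun x => k x = w) = sumP L p (fun x => prefix w (k x)) -
    sumR (map (fun a => sumP L p (fun x => prefix (w ++ [a]) (k x))) As).
Proof.
  intros N HA. rewrite sumP_family; auto.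
  2:{ intros a1 a2 x _ _ [d1 E1] [d2 E2]. rewrite E1 in E2. rewrite <- !app_assoc in E2.
      apply app_inv_head in E2. simpl in E2. injection E2; auto. }
  assert (H : sumP L p (fun x => prefix w (k x)) =
     sumP L p (fun x => k x = w \/ exists a, In a As /\ prefix (w ++ [a]) (k x))).
  { apply sumP_ext. intros x Hx. split.
    - intros [d E]. destruct d as [|a d].
      + left; rewrite E, app_nil_r; auto.
      + right; exists a; split.
        * apply (HA x a Hx). rewrite E; apply in_or_app; right; left; auto.
        * exists d; rewrite E, <- app_assoc; reflexivity.
    - intros [E|[a [_ [d E]]]].
      + exists []; rewrite E, app_nil_r; auto.
      + exists (a :: d); rewrite E, <- app_assoc; reflexivity. }
  rewrite H, sumP_or. 1: lra.
  intros x _ [E [a [_ [d E2]]]]. rewrite E in E2. apply (f_equal (@length A)) in E2.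
  rewrite !length_app in E2. simpl in E2. lia.
Qed.

Lemma lemma_b {X1 X2 A} (L1 : list X1) (L2 : list X2) p1 p2 (k1 : X1 -> list A) (k2 : X2 -> list A) :
  (forall alpha, sumP L1 p1 (fun x => prefix alpha (k1 x)) = sumP L2 p2 (fun x => prefix alpha (k2 x))) ->
  forall w, sumP L1 p1 (fun x => k1 x = w) = sumP L2 p2 (fun x => k2 x = w).
Proof.
  intros H w. destruct (dedup_spec (flat_map k1 L1 ++ flat_map k2 L2)) as [N HA].
  rewrite (decomp L1 p1 k1 w N), (decomp L2 p2 k2 w N).
  - rewrite H. f_equal. apply sumR_map_ext; auto.
  - intros x a Hx Ha. apply HA, in_or_app; right; apply in_flat_map; eauto.
  - intros x a Hx Ha. apply HA, in_or_app; left; apply in_flat_map; eauto.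
Qed.

Fixpoint form {A} (e : list (option A)) : tform A :=
  match e with [] => TTop | a :: e' => TDia a (form e') end.

Lemma ftrace_form {A} (e : list (option A)) : ftrace (form e) = e.
Proof. induction e; simpl; congruence. Qed.

Lemma ftrace_inj {A} (f g : tform A) : ftrace f = ftrace g -> f = g.
Proof. revert g; induction f; destruct g; simpl; intros H; try discriminate; auto.
  injection H; intros; f_equal; auto. Qed.

Lemma csat_iff {A X} (c : list (step A X)) f :
  (csat c f /\ length c = depth f) <-> comp_trace c = ftrace f.
Proof.
  unfold comp_trace. revert c; induction f as [|a f IH]; intros c; destruct c as [|[[a' pi] y] c]; simpl.
  - split; auto.
  - split; [intros [_ H]; discriminate| discriminate].
  - split; [intros [[] _]| discriminate].
  - split.
    + intros [[-> Hc] E]. injection E as E. f_equal. apply IH. auto.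
    + intros E. injection E as E1 E2. subst. apply IH in E2. destruct E2. auto.
Qed.

Lemma vis_map_Some {A} (w : list A) : vis (map Some w) = w.
Proof. induction w; simpl; congruence. Qed.

Definition csum {A} (f : tform A) (psi : tdform A) : R :=
  sumR (map (fun gr => if emi (tform_equiv (fst gr) f) then snd gr else 0) psi).

Lemma csum_cons {A} (f : tform A) g r psi :
  csum f ((g, r) :: psi) = (if emi (tform_equiv g f) then r else 0) + csum f psi.
Proof. reflexivity. Qed.

Lemma class_mass_iff {A} (f : tform A) psi m : class_mass f psi m <-> m = csum f psi.
Proof. revert m; induction psi as [|[g r] psi IH]; intros m; split.
  - intros H; inversion H; subst; reflexivity.
  - intros ->; constructor.
  - intros H; inversion H as [|f' g' r' psi' m' He Hm| f' g' r' psi' m' He Hm]; subst;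
      rewrite csum_cons; apply IH in Hm; subst; destruct (emi (tform_equiv g f)); try contradiction; lra.
  - intros ->; rewrite csum_cons; destruct (emi (tform_equiv g f)).
    + apply cm_in; auto. apply IH; reflexivity.
    + rewrite Rplus_0_l. apply cm_out; auto. apply IH; reflexivity.
Qed.

Lemma equiv_of_csum {A} (psi1 psi2 : tdform A) :
  (forall f, csum f psi1 = csum f psi2) -> tdf_equiv psi1 psi2.
Proof. intros H f m; rewrite !class_mass_iff, H; tauto. Qed.

Lemma SAT {A Z} (TZ : Z -> option A -> (Z -> R) -> Prop) z0 L psi :
  NoDup L -> (forall c, is_max_comp TZ z0 c <-> In c L) -> sumR (map (@comp_prob A Z) L) = 1 ->
  (forall c, In c L -> 0 < comp_prob c) ->
  is_tdform psi ->
  (forall f r, In (f, r) psi ->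
     set_prob (fun c => is_max_comp TZ z0 c /\ csat c f /\ length c = depth f) r) ->
  forall f, csum f psi = sumP L (@comp_prob A Z) (fun c => vis (comp_trace c) = vis (ftrace f)).
Proof.
  intros N HL S1 Hpos [_ [Nd [_ Ssum]]] Hsat.
  assert (Hr : forall g r, In (g, r) psi -> r = sumP L (@comp_prob A Z) (fun c => comp_trace c = ftrace g)).
  { intros g r Hin. apply (set_prob_unique (Hsat g r Hin)).
    eapply set_prob_ext; [|apply (set_prob_filter _ (fun c => comp_trace c = ftrace g) N HL)].
    intros c. cbv beta. rewrite <- csat_iff. tauto. }
  set (G := map fst psi).
  assert (Hsumgen : forall Q : tform A -> Prop,
     sumR (map (fun gr => if emi (Q (fst gr)) then snd gr else 0) psi)
     = sumP L (@comp_prob A Z) (fun c => exists g, In g G /\ (comp_trace c = ftrace g /\ Q g))).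
  { intros Q. rewrite <- sumP_family.
    - unfold G; rewrite map_map. apply sumR_map_ext. intros [g r] Hin. simpl.
      rewrite (Hr g r Hin). destruct (emi (Q g)).
      + apply sumP_ext; intros; tauto.
      + symmetry; apply sumP_false; tauto.
    - exact Nd.
    - intros g1 g2 x _ _ [E1 _] [E2 _]. apply ftrace_inj; congruence. }
  assert (Hcov : forall c, In c L -> exists g, In g G /\ (comp_trace c = ftrace g /\ True)).
  { apply sumP_all with (p := @comp_prob A Z); [exact Hpos|].
    rewrite <- Hsumgen, S1, <- Ssum. apply sumR_map_ext. intros; destruct (emi True); tauto. }
  intros f. unfold csum. rewrite (Hsumgen (fun g => tform_equiv g f)). apply sumP_ext. intros c Hc. split.
  - intros [g [_ [E He]]]. rewrite E. exact He.
  - intros E. destruct (Hcov c Hc) as [g [Hg [Eg _]]]. exists g; split; auto; split; auto.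
    unfold tform_equiv. rewrite <- Eg; auto.
Qed.

Lemma sumP_pos {X} (L : list X) p Q x : (forall x, In x L -> 0 <= p x) -> In x L -> Q x -> 0 < p x ->
  0 < sumP L p Q.
Proof. unfold sumP; induction L as [|y L IH]; simpl; intros H Hx Hq Hp; [destruct Hx|].
  assert (0 <= sumR (map (fun x => if emi (Q x) then p x else 0) L)) by (apply sumP_nonneg; auto).
  destruct Hx as [->|Hx].
  - destruct (emi (Q x)); [lra|contradiction].
  - assert (0 < sumR (map (fun x => if emi (Q x) then p x else 0) L)) by (apply IH; auto).
    pose proof (H y (or_introl eq_refl)). destruct (emi (Q y)); lra.
Qed.

Lemma BUILD {A Z} (TZ : Z -> option A -> (Z -> R) -> Prop) z0 L :
  NoDup L -> (forall c, is_max_comp TZ z0 c <-> In c L) -> sumR (map (@comp_prob A Z) L) = 1 ->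
  (forall c, In c L -> 0 < comp_prob c) ->
  exists psi, is_tdform psi /\ (forall f r, In (f, r) psi ->
     set_prob (fun c => is_max_comp TZ z0 c /\ csat c f /\ length c = depth f) r).
Proof.
  intros N HL S1 Hpos.
  destruct (dedup_spec (map (@comp_trace A Z) L)) as [NE HE].
  set (E := dedup _) in *.
  assert (Hge : forall c, In c L -> 0 <= comp_prob c) by (intros; apply Rlt_le; auto).
  exists (map (fun e => (form e, sumP L (@comp_prob A Z) (fun c => comp_trace c = e))) E).
  split; [split; [|split; [|split]]|].
  - destruct L as [|c0 L0]; [simpl in S1; lra|]. intros Hnil. apply map_eq_nil in Hnil.
    assert (Hi : In (comp_trace c0) E) by (apply HE; simpl; auto). rewrite Hnil in Hi; destruct Hi.
  - rewrite map_map. simpl. apply FinFun.Injective_map_NoDup; auto.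
    intros e1 e2 He. rewrite <- (ftrace_form e1), <- (ftrace_form e2), He. reflexivity.
  - intros f r Hin. apply in_map_iff in Hin. destruct Hin as [e [Ee He]]. injection Ee as <- <-.
    apply HE, in_map_iff in He. destruct He as [c [Ec Hc]]. split.
    + apply sumP_pos with c; auto.
    + rewrite <- S1. apply sumP_le; auto.
  - rewrite map_map. simpl. rewrite (sumP_family L (@comp_prob A Z) (fun e c => comp_trace c = e)); auto.
    + rewrite sumP_true; auto. intros c Hc. exists (comp_trace c); split; auto.
      apply HE, in_map; auto.
    + intros; congruence.
  - intros f r Hin. apply in_map_iff in Hin. destruct Hin as [e [Ee He]]. injection Ee as <- <-.
    eapply set_prob_ext; [|apply (set_prob_filter _ (fun c => comp_trace c = e) N HL)].
    intros c. cbv beta. rewrite csat_iff, ftrace_form. tauto.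
Qed.

Lemma half1 {A S} (T : S -> option A -> (S -> R) -> Prop) (s t : S) :
  finite_proc T s -> finite_proc T t -> wpte_half T s t -> Lw_half T s t.
Proof.
  intros Fs Ft H psi Hpsi [Z1 [T1 [c1 [z1 [R1 Hs1]]]]].
  destruct (H Z1 T1 c1 z1 R1) as [Z2 [T2 [c2 [z2 [R2 HW]]]]].
  destruct (RES_L R1 Fs) as [L1 [N1 [HL1 [S1 [P1 W1]]]]].
  destruct (RES_L R2 Ft) as [L2 [N2 [HL2 [S2 [P2 W2]]]]].
  assert (Hpre : forall alpha,
     sumP L1 (@comp_prob A Z1) (fun c => prefix alpha (vis (comp_trace c))) =
     sumP L2 (@comp_prob A Z2) (fun c => prefix alpha (vis (comp_trace c)))).
  { intros alpha. destruct (HW alpha) as [r [Hr1 Hr2]].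
    rewrite (set_prob_unique (W1 alpha) Hr1), (set_prob_unique (W2 alpha) Hr2). reflexivity. }
  pose proof (lemma_b L1 L2 (@comp_prob A Z1) (@comp_prob A Z2)
     (fun c => vis (comp_trace c)) (fun c => vis (comp_trace c)) Hpre) as Hmu.
  destruct (BUILD N2 HL2 S2 P2) as [psi' [Hpsi' Hs2]].
  exists psi'. split; [auto|split].
  - exists Z2, T2, c2, z2; split; auto.
  - apply equiv_of_csum. intros f.
    rewrite (SAT N1 HL1 S1 P1 Hpsi Hs1), (SAT N2 HL2 S2 P2 Hpsi' Hs2). apply Hmu.
Qed.

Lemma half2 {A S} (T : S -> option A -> (S -> R) -> Prop) (s t : S) :
  finite_proc T s -> finite_proc T t -> Lw_half T s t -> wpte_half T s t.
Proof.
  intros Fs Ft H Z1 T1 c1 z1 R1.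
  destruct (RES_L R1 Fs) as [L1 [N1 [HL1 [S1 [P1 W1]]]]].
  destruct (BUILD N1 HL1 S1 P1) as [psi [Hpsi Hs1]].
  destruct (H psi Hpsi) as [psi' [Hpsi' [[Z2 [T2 [c2 [z2 [R2 Hs2]]]]] Heq]]].
  { exists Z1, T1, c1, z1; split; auto. }
  destruct (RES_L R2 Ft) as [L2 [N2 [HL2 [S2 [P2 W2]]]]].
  assert (Hmu : forall w, sumP L1 (@comp_prob A Z1) (fun c => vis (comp_trace c) = w) =
                          sumP L2 (@comp_prob A Z2) (fun c => vis (comp_trace c) = w)).
  { intros w. pose proof (SAT N1 HL1 S1 P1 Hpsi Hs1 (form (map Some w))) as E1.
    pose proof (SAT N2 HL2 S2 P2 Hpsi' Hs2 (form (map Some w))) as E2.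
    rewrite ftrace_form, vis_map_Some in E1, E2.
    rewrite <- E1, <- E2.
    assert (Hc : class_mass (form (map Some w)) psi' (csum (form (map Some w)) psi)).
    { apply Heq, class_mass_iff; reflexivity. }
    apply class_mass_iff in Hc. exact Hc. }
  pose proof (lemma_a L1 L2 (@comp_prob A Z1) (@comp_prob A Z2)
     (fun c => vis (comp_trace c)) (fun c => vis (comp_trace c)) Hmu) as Ha.
  exists Z2, T2, c2, z2. split; auto. intros alpha.
  exists (sumP L1 (@comp_prob A Z1) (fun c => prefix alpha (vis (comp_trace c)))). split; auto.
  assert (E := Ha (prefix alpha)). cbv beta in E. rewrite E. apply W2.
Qed.

Theorem theorem13 (A S : Type) (T : S -> option A -> (S -> R) -> Prop)
  (HT : is_pts T) (s t : S)
  (Hs_if : image_finite T s) (Hs_fin : finite_proc T s)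
  (Ht_if : image_finite T t) (Ht_fin : finite_proc T t) :
  weak_prob_trace_equiv T s t <-> Lw_equiv T s t.
Proof.
  split; intros [H1 H2]; split.
  - apply half1; auto.
  - apply half1; auto.
  - apply half2; auto.
  - apply half2; auto.
Qed.
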